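(* Let $m\ge 1$, $q\ge 1$, and let $(A_0,\ldots,A_q)$ be a symmetric Clifford system on $\mathbb{R}^{2m}$. Define the cubic polynomial on $\mathbb{R}^{2m}\oplus\mathbb{R}^{q+1}$ $$\Phi(x):=y^{T}A_z y=\sum_{i=0}^q z_i\, y^T A_i y,\qquad x=(y,z)\in\mathbb{R}^{2m}\oplus\mathbb{R}^{q+1},$$ where $A_z:=\sum_{i=0}^q z_iA_i$. Then $\Phi$ is a radial minimal cubic; more precisely, $$L(\Phi)=-8|x|^2\,\Phi,$$ where $|x|^2=|y|^2+|z|^2$.
   Context: A (symmetric) Clifford system on $\mathbb{R}^{2m}$ with $q\ge1$ is a tuple $(A_0,\ldots,A_q)$ of symmetric linear endomorphisms (symmetric $2m\times 2m$ real matrices) satisfying $A_iA_j+A_jA_i=2\delta_{ij}I$ for all $0\le i,j\le q$, where $I$ is the identity. For a polynomial $f$ on $\mathbb{R}^n$, the operator $L$ is $L(f):=|\nabla f|^2\Delta f-\sum_{i,j=1}^n f_{x_i}f_{x_j}f_{x_ix_j}$. A homogeneous cubic polynomial $f$ is called a minimal cubic if $L(f)$ is divisible by $f$ in the polynomial ring, and a radial minimal cubic if $L(f)=c|x|^2 f$ for some constant $c\in\mathbb{R}$. *)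

(* Defs.v *)
From HB Require Import structures.
From mathcomp Require Import all_boot all_order all_algebra.
From mathcomp Require Import mpoly.
Set Implicit Arguments. Unset Strict Implicit. Unset Printing Implicit Defensive.
Import Order.TTheory GRing.Theory Num.Theory.
Local Open Scope ring_scope.

Definition clifford_system (R : realFieldType) (m q : nat)
  (A : 'I_q.+1 -> 'M[R]_(m.*2)) : Prop :=
  (forall i, (A i)^T = A i) /\
  (forall i j, A i *m A j + A j *m A i = ((i == j)%:R * 2) *: 1%:M).

Definition Lop (R : realFieldType) (n : nat) (f : {mpoly R[n]}) : {mpoly R[n]} :=
  (\sum_(i < n) (f^`M(i)) ^+ 2) * (\sum_(i < n) (f^`M(i))^`M(i))
  - \sum_(i < n) \sum_(j < n) f^`M(i) * f^`M(j) * (f^`M(i))^`M(j).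

Definition normsq (R : realFieldType) (n : nat) : {mpoly R[n]} :=
  \sum_(i < n) 'X_i ^+ 2.

Definition minimal_cubic (R : realFieldType) (n : nat) (f : {mpoly R[n]}) : Prop :=
  f \is 3.-homog /\ exists g : {mpoly R[n]}, Lop f = g * f.

Definition radial_minimal_cubic (R : realFieldType) (n : nat) (f : {mpoly R[n]}) : Prop :=
  f \is 3.-homog /\ exists c : R, Lop f = c *: (@normsq R n * f).

(* Phi(y,z) = sum_i z_i y^T A_i y on R^(2m) (+) R^(q+1);
   coordinates y_a = 'X_(lshift _ a), z_i = 'X_(rshift _ i). *)
Definition Phi (R : realFieldType) (m q : nat) (A : 'I_q.+1 -> 'M[R]_(m.*2))
  : {mpoly R[m.*2 + q.+1]} :=
  \sum_(i < q.+1) 'X_(rshift m.*2 i) *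
     \sum_(a < m.*2) \sum_(b < m.*2)
        (A i a b)%:MP * 'X_(lshift q.+1 a) * 'X_(lshift q.+1 b).

(* Main.v *)
Require Import Defs.
From HB Require Import structures.
From mathcomp Require Import all_boot all_order all_algebra.
From mathcomp Require Import mpoly.
From mathcomp Require Import ring lra.
Import Order.TTheory GRing.Theory Num.Theory.
Local Open Scope ring_scope.
Set Implicit Arguments. Unset Strict Implicit. Unset Printing Implicit Defensive.

Lemma dX (R : realFieldType) n (i j : 'I_n) :
  ('X_j : {mpoly R[n]})^`M(i) = (j == i)%:R.
Proof.
rewrite mderivX mnm1E; case: eqP => [->|_]; last by rewrite scale0r.
have -> : (U_(i) - U_(i))%MM = 0%MM by apply/mnmP => k; rewrite mnmBE mnm0E subnn.
by rewrite mpolyX0 scale1r.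
Qed.

Lemma dC (R : realFieldType) n (i : 'I_n) (c : R) :
  (c%:MP : {mpoly R[n]})^`M(i) = 0.
Proof. exact: mderivC. Qed.

Lemma dsum (R : realFieldType) n (i : 'I_n) (I : finType) (F : I -> {mpoly R[n]}) :
  (\sum_k F k)^`M(i) = \sum_k (F k)^`M(i).
Proof. exact: raddf_sum. Qed.

Lemma sum_delta (P : comNzRingType) k (c : 'I_k) (F : 'I_k -> P) :
  \sum_(a < k) (a == c)%:R * F a = F c.
Proof.
rewrite (bigD1 c) //= eqxx mul1r big1 ?addr0 // => a /negbTE ->.
by rewrite mul0r.
Qed.

Section Main.
Variables (R : realFieldType) (m q : nat) (A : 'I_q.+1 -> 'M[R]_(m.*2)).
Hypothesis hsym : forall i, (A i)^T = A i.
Hypothesis hcl : forall i j, A i *m A j + A j *m A i = ((i == j)%:R * 2) *: 1%:M.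
Local Notation N := (m.*2 + q.+1)%N.
Local Notation P := {mpoly R[N]}.
Definition Y (a : 'I_m.*2) : P := 'X_(lshift q.+1 a).
Definition Z (i : 'I_q.+1) : P := 'X_(rshift m.*2 i).
Definition w i c : P := \sum_b (A i c b)%:MP * Y b.
Definition S i : P := \sum_a \sum_b (A i a b)%:MP * Y a * Y b.

Lemma Asym i a b : A i a b = A i b a.
Proof. by rewrite -{1}hsym mxE. Qed.

Lemma dYL a d : (Y a)^`M(lshift q.+1 d) = (a == d)%:R.
Proof. by rewrite /Y dX (inj_eq (@lshift_inj _ _)). Qed.
Lemma dYR a j : (Y a)^`M(rshift m.*2 j) = 0.
Proof. by rewrite /Y dX eq_lrshift. Qed.
Lemma dZL i d : (Z i)^`M(lshift q.+1 d) = 0.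
Proof. by rewrite /Z dX eq_rlshift. Qed.
Lemma dZR i j : (Z i)^`M(rshift m.*2 j) = (i == j)%:R.
Proof. by rewrite /Z dX (inj_eq (@rshift_inj _ _)). Qed.

Lemma dwL i c d : (w i c)^`M(lshift q.+1 d) = (A i c d)%:MP.
Proof.
rewrite /w dsum; under eq_bigr do rewrite mderivM dC dYL mul0r add0r mulrC.
exact: sum_delta.
Qed.
Lemma dwR i c j : (w i c)^`M(rshift m.*2 j) = 0.
Proof.
rewrite /w dsum big1 // => b _; by rewrite mderivM dC dYR mul0r mulr0 addr0.
Qed.

Lemma SE i : S i = \sum_a Y a * w i a.
Proof.
apply: eq_bigr => a _; rewrite /w mulr_sumr; apply: eq_bigr => b _; ring.
Qed.

Lemma dSL i d : (S i)^`M(lshift q.+1 d) = 2%:R * w i d.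
Proof.
rewrite SE dsum; under eq_bigr do rewrite mderivM dYL dwL.
rewrite big_split /= sum_delta /w mulr2n mulrDl mul1r; congr (_ + _).
by apply: eq_bigr => a _; rewrite mulrC Asym.
Qed.
Lemma dSR i j : (S i)^`M(rshift m.*2 j) = 0.
Proof.
rewrite SE dsum big1 // => a _; by rewrite mderivM dYR dwR mul0r mulr0 addr0.
Qed.

Lemma d2 k : ((2%:R : P))^`M(k) = 0.
Proof. by rewrite -mpolyC_nat mderivC. Qed.

Definition gy c : P := \sum_i Z i * (2%:R * w i c).

Lemma PhiE : Phi A = \sum_i Z i * S i.
Proof. by []. Qed.

Lemma dPL c : (Phi A)^`M(lshift q.+1 c) = gy c.
Proof.
rewrite PhiE dsum; apply: eq_bigr => i _.
by rewrite mderivM dZL dSL mul0r add0r.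
Qed.
Lemma dPR j : (Phi A)^`M(rshift m.*2 j) = S j.
Proof.
rewrite PhiE dsum; under eq_bigr do rewrite mderivM dZR dSR mulr0 addr0.
exact: sum_delta.
Qed.
Lemma dgyL c d : (gy c)^`M(lshift q.+1 d) = \sum_i Z i * (2%:R * (A i c d)%:MP).
Proof.
rewrite /gy dsum; apply: eq_bigr => i _.
by rewrite !mderivM dZL dwL mul0r add0r d2 mul0r add0r.
Qed.
Lemma dgyR c j : (gy c)^`M(rshift m.*2 j) = 2%:R * w j c.
Proof.
rewrite /gy dsum; under eq_bigr do rewrite !mderivM dZR dwR d2 mul0r add0r !mulr0 addr0.
exact: sum_delta.
Qed.

Hypothesis hq : (1 <= q)%N.

Lemma hcl0 i j : i != j -> A i *m A j + A j *m A i = 0.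
Proof. by move=> /negbTE ij; rewrite hcl ij mul0r scale0r. Qed.

Lemma tr0 i : \tr (A i) = 0.
Proof.
pose j : 'I_q.+1 := if i == ord0 then inord 1 else ord0.
have ij : i != j.
  rewrite /j; case: (i =P ord0) => [->|/eqP //].
  by apply/eqP => /(congr1 val) /=; rewrite inordK // ltnS.
have Hjj : A j *m A j + A j *m A j = 2%:R *: 1%:M by rewrite hcl eqxx mul1r.
have Hij := hcl0 ij.
set t := \tr (A i *m A j *m A j).
have t0 : t = - t.
  rewrite {1}/t mxtrace_mulC mulmxA.
  have -> : A j *m A i = - (A i *m A j) by apply/eqP; rewrite -addr_eq0 addrC Hij.
  by rewrite mulNmx raddfN.
have : \tr (A i *m (A j *m A j + A j *m A j)) = 2%:R * \tr (A i).
  by rewrite Hjj -scalemxAr mulmx1 mxtraceZ.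
have t00 : t = 0 by lra.
rewrite mulmxDr mxtraceD !mulmxA -/t t00 addr0 => h; lra.
Qed.

Lemma half (x y : P) : x + x = y + y -> x = y.
Proof.
rewrite -!mulr2n -!scaler_nat => /(congr1 (fun t => (2%:R : R)^-1 *: t)).
by rewrite !scalerA mulVf ?pnatr_eq0 // !scale1r.
Qed.

Lemma halfM k l (X X' : 'M[P]_(k, l)) : X + X = X' + X' -> X = X'.
Proof.
move=> h; apply/matrixP => a b; apply: half.
by have := congr1 (fun M : 'M[P]_(k, l) => M a b) h; rewrite /= !mxE.
Qed.

Definition Yv : 'cV[P]_(m.*2) := \col_a Y a.
Definition Cm (M : 'M[R]_(m.*2)) : 'M[P]_(m.*2) := \matrix_(a, b) (M a b)%:MP.
Definition Cz : 'M[P]_(m.*2) := \matrix_(c, d) \sum_i Z i * (A i c d)%:MP.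
Definition NZ : P := \sum_i Z i ^+ 2.
Definition NY : P := \sum_a Y a ^+ 2.

Lemma CmM M M' : Cm (M *m M') = Cm M *m Cm M'.
Proof.
apply/matrixP => a b; rewrite !mxE raddf_sum; apply: eq_bigr => e _.
by rewrite !mxE; apply: mpolyCM.
Qed.
Lemma CmD M M' : Cm (M + M') = Cm M + Cm M'.
Proof. by apply/matrixP => a b; rewrite !mxE mpolyCD. Qed.
Lemma CmS (c : R) : Cm (c *: 1%:M) = (c%:MP)%:M.
Proof.
apply/matrixP => a b; rewrite !mxE; case: eqP => _.
  by rewrite mulr1.
by rewrite mulr0 mulr0n mpolyC0.
Qed.
Lemma CmT M : (Cm M)^T = Cm M^T.
Proof. by apply/matrixP => a b; rewrite !mxE. Qed.

Lemma CzE : Cz = \sum_i Z i *: Cm (A i).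
Proof.
apply/matrixP => a b; rewrite !mxE summxE; apply: eq_bigr => i _.
by rewrite !mxE.
Qed.

Lemma CzT : Cz^T = Cz.
Proof.
apply/matrixP => a b; rewrite !mxE; apply: eq_bigr => i _; by rewrite Asym.
Qed.

Lemma CzCz : Cz *m Cz = NZ%:M.
Proof.
have E : Cz *m Cz = \sum_i \sum_j (Z i * Z j) *: Cm (A i *m A j).
  rewrite CzE mulmx_suml; apply: eq_bigr => i _.
  rewrite mulmx_sumr; apply: eq_bigr => j _.
  by rewrite -scalemxAl -scalemxAr scalerA CmM.
apply: halfM; rewrite E.
rewrite {1}exchange_big /= -big_split /=.
under eq_bigr => i _.
  rewrite -big_split /=.
  under eq_bigr => j _ do rewrite [Z j * Z i]mulrC -scalerDr -CmD hcl CmS scale_scalar_mx.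
  over.
under eq_bigr do rewrite -(raddf_sum (@scalar_mx P m.*2)).
rewrite -(raddfD (@scalar_mx P m.*2)) -(raddf_sum (@scalar_mx P m.*2)).
congr (_%:M); rewrite /NZ -big_split /=; apply: eq_bigr => i _.
rewrite (bigD1 i) //= eqxx big1 ?addr0.
  by rewrite mpolyCM !mpolyC_nat mul1r mulr_natr mulr2n expr2.
by move=> j /negbTE; rewrite eq_sym => ->; rewrite mul0r mpolyC0 mulr0.
Qed.

Lemma wE j c : (Cm (A j) *m Yv) c 0 = w j c.
Proof. rewrite !mxE; apply: eq_bigr => b _; by rewrite !mxE. Qed.

Lemma uE c : (Cz *m Yv) c 0 = \sum_i Z i * w i c.
Proof.
rewrite CzE mulmx_suml summxE; apply: eq_bigr => i _.
by rewrite -scalemxAl mxE wE.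
Qed.

Lemma QF (u : 'cV[P]_(m.*2)) M :
  (u^T *m M *m u) 0 0 = \sum_c \sum_d u c 0 * u d 0 * M c d.
Proof.
rewrite mxE exchange_big; apply: eq_bigr => d _ /=.
rewrite !mxE mulr_suml; apply: eq_bigr => c _; rewrite !mxE; ring.
Qed.

Lemma QT (u : 'cV[P]_(m.*2)) M :
  (u^T *m M *m u) 0 0 = (u^T *m M^T *m u) 0 0.
Proof.
rewrite !QF exchange_big; apply: eq_bigr => c _; apply: eq_bigr => d _.
by rewrite mxE; ring.
Qed.

Lemma NYE : (Yv^T *m Yv) 0 0 = NY.
Proof. rewrite mxE; apply: eq_bigr => a _; by rewrite !mxE expr2. Qed.

Lemma PhiM : Phi A = (Yv^T *m Cz *m Yv) 0 0.
Proof.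
rewrite QF PhiE.
under eq_bigr do rewrite mulr_sumr.
rewrite exchange_big; apply: eq_bigr => a _ /=.
under eq_bigr do rewrite mulr_sumr.
rewrite exchange_big; apply: eq_bigr => b _ /=.
rewrite !mxE mulr_sumr; apply: eq_bigr => i _; ring.
Qed.

Lemma K1 i j : \sum_c w i c * w j c = (i == j)%:R * NY.
Proof.
have E : \sum_c w i c * w j c = (Yv^T *m Cm (A i *m A j) *m Yv) 0 0.
  have -> : Yv^T *m Cm (A i *m A j) *m Yv = (Cm (A i) *m Yv)^T *m (Cm (A j) *m Yv).
    by rewrite trmx_mul CmT hsym CmM !mulmxA.
  rewrite mxE.
  apply: eq_bigr => c _; by rewrite -!wE [(_^T) _ _]mxE.
apply: half; rewrite E {2}QT CmT trmx_mul !hsym.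
have -> : forall B C : 'M[P]_(1, 1), B 0 0 + C 0 0 = (B + C) 0 0 by move=> *; rewrite mxE.
rewrite -mulmxDl -mulmxDr -CmD hcl CmS mul_mx_scalar -scalemxAl mxE NYE.
rewrite mpolyCM mpolyC_nat mpolyC_nat; ring.
Qed.

Lemma gyE c : gy c = 2%:R * (Cz *m Yv) c 0.
Proof. rewrite uE /gy mulr_sumr; apply: eq_bigr => i _; ring. Qed.

Lemma HE c d : \sum_i Z i * (2%:R * (A i c d)%:MP) = 2%:R * Cz c d.
Proof. rewrite mxE mulr_sumr; apply: eq_bigr => i _; ring. Qed.

Lemma T1 : \sum_c \sum_d gy c * gy d * (\sum_i Z i * (2%:R * (A i c d)%:MP))
  = 8%:R * NZ * Phi A.
Proof.
have E : \sum_c \sum_d gy c * gy d * (\sum_i Z i * (2%:R * (A i c d)%:MP))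
  = 8%:R * ((Cz *m Yv)^T *m Cz *m (Cz *m Yv)) 0 0.
  rewrite QF mulr_sumr; apply: eq_bigr => c _; rewrite mulr_sumr.
  apply: eq_bigr => d _; rewrite HE !gyE; ring.
rewrite E trmx_mul CzT !mulmxA -(mulmxA _ Cz Cz) CzCz mul_mx_scalar.
by rewrite -scalemxAl mxE -PhiM mulrA.
Qed.

Lemma T2 : \sum_c \sum_j gy c * S j * (2%:R * w j c) = 4%:R * NY * Phi A.
Proof.
rewrite exchange_big /= PhiE [RHS]mulr_sumr; apply: eq_bigr => j _ /=.
have -> : \sum_c gy c * S j * (2%:R * w j c)
    = \sum_i (4%:R * S j * Z i) * \sum_c w i c * w j c.
  rewrite /gy; under eq_bigr do rewrite !mulr_suml.
  rewrite exchange_big; apply: eq_bigr => i _ /=.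
  rewrite mulr_sumr; apply: eq_bigr => c _; ring.
rewrite (eq_bigr (fun i => (i == j)%:R * (4%:R * S j * Z i * NY))); last first.
  by move=> i _; rewrite K1; ring.
rewrite sum_delta; ring.
Qed.

Lemma lap0 : \sum_(k < N) (Phi A)^`M(k)^`M(k) = 0.
Proof.
rewrite big_split_ord /=.
rewrite (eq_bigr (fun c => \sum_i Z i * (2%:R * (A i c c)%:MP))); last first.
  by move=> c _; rewrite dPL dgyL.
rewrite [X in _ + X]big1; last by move=> j _; rewrite dPR dSR.
rewrite addr0 exchange_big big1 // => i _ /=.
rewrite -mulr_sumr -mulr_sumr -raddf_sum /=.
have := tr0 i; rewrite /mxtrace => ->.
by rewrite mpolyC0 !mulr0.
Qed.

Lemma normsqE : normsq R N = NY + NZ.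
Proof. by rewrite /normsq big_split_ord. Qed.

Lemma LopPhi : Lop (Phi A) = (-8) *: (normsq R N * Phi A).
Proof.
rewrite /Lop lap0 mulr0 sub0r.
have H1 : forall c, \sum_(l < N) (Phi A)^`M(lshift q.+1 c) * (Phi A)^`M(l)
     * ((Phi A)^`M(lshift q.+1 c))^`M(l)
   = \sum_d gy c * gy d * (\sum_i Z i * (2%:R * (A i c d)%:MP))
     + \sum_j gy c * S j * (2%:R * w j c).
  move=> c; rewrite big_split_ord /=; congr (_ + _); apply: eq_bigr => l _.
    by rewrite !dPL dgyL.
  by rewrite dPL dPR dgyR.
have H2 : forall j, \sum_(l < N) (Phi A)^`M(rshift m.*2 j) * (Phi A)^`M(l)
     * ((Phi A)^`M(rshift m.*2 j))^`M(l)
   = \sum_c S j * gy c * (2%:R * w j c).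
  move=> j; rewrite big_split_ord /= [X in _ + X]big1 ?addr0.
    by apply: eq_bigr => c _; rewrite dPL dPR dSL.
  by move=> k _; rewrite !dPR dSR mulr0.
rewrite big_split_ord /= (eq_bigr _ (fun c _ => H1 c)) (eq_bigr _ (fun j _ => H2 j)).
rewrite big_split /= T1 T2.
have -> : \sum_j \sum_c S j * gy c * (2%:R * w j c) = 4%:R * NY * Phi A.
  rewrite -T2 exchange_big; apply: eq_bigr => c _; apply: eq_bigr => j _ /=; ring.
rewrite normsqE -mul_mpolyC mpolyCN mpolyC_nat; ring.
Qed.
End Main.

Lemma X_homog (R : realFieldType) n (i : 'I_n) : ('X_i : {mpoly R[n]}) \is 1.-homog.
Proof. by rewrite dhomogX; apply/eqP; apply: mdeg1. Qed.

Lemma Phi_homog (R : realFieldType) m q (A : 'I_q.+1 -> 'M[R]_(m.*2)) :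
  Phi A \is 3.-homog.
Proof.
rewrite /Phi; apply: rpred_sum => i _.
apply: (dhomogM (d := 1%N) (e := 2%N)); first exact: X_homog.
apply: rpred_sum => a _; apply: rpred_sum => b _.
rewrite -mulrA mul_mpolyC; apply: dhomogZ.
by apply: (dhomogM (d := 1%N) (e := 1%N)); exact: X_homog.
Qed.

Unset Implicit Arguments.

Theorem theorem1 (R : realFieldType) (m q : nat) (A : 'I_q.+1 -> 'M[R]_(m.*2)) :
  (1 <= m)%N -> (1 <= q)%N -> clifford_system A ->
  radial_minimal_cubic (Phi A) /\
  Lop (Phi A) = (-8) *: (@normsq R (m.*2 + q.+1) * Phi A).
Proof.
move=> _ hq [hsym hcl]; have L := LopPhi hsym hcl hq.
split; last exact: L.
split; first exact: Phi_homog.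
by exists (-8).
Qed.
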